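(* Let $N\ge 2$ and consider the synchronous-play slotted-ALOHA game among $N$ players in which player $i$ chooses a transmission (access) probability $q_i\in[0,1]$ and has net utility $$V_i(\underline{q})=C_i\log\gamma_i(\underline{q})+A_i\,\alpha_i(\underline{q}_{-i})\,\overline{\gamma}_{-i}(\underline{q})-M_i q_i,$$ where $\gamma_i(\underline{q})=q_i\prod_{j\ne i}(1-q_j)$, $\alpha_i(\underline{q}_{-i})=\prod_{j\ne i}(1-q_j)$, and $\overline{\gamma}_{-i}(\underline{q})=\frac{1}{N-1}\sum_{j\ne i}\gamma_j(\underline{q})$, with $C_i,M_i>0$ and $A_i\ge 0$. Suppose all players have the same normalized parameters $c:=C_i/M_i<1$ and $a:=A_i/M_i$. Then there is a symmetric Nash equilibrium $\underline{q}^*=q^*\underline{1}$ (where $\underline{1}$ is the all-ones vector in $\mathbb{R}^N$), where $0<q^*<1$ is a solution of $$f(q):=a q^2(1-q)^{2N-3}+q-c=0.$$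
   Context: $\underline{q}=(q_1,\dots,q_N)$ is the profile of access probabilities and $\underline{q}_{-i}$ is the profile of all players other than $i$. $\gamma_i$ is player $i$'s mean throughput (probability of a successful transmission by $i$ in a slot), $\alpha_i$ is player $i$'s dynamic altruism factor, and $\overline{\gamma}_{-i}$ is the mean throughput of the other players. A Nash equilibrium is a profile $\underline{q}^*$ such that for each $i$, $q_i^*$ maximizes $V_i(q_i;\underline{q}^*_{-i})$ over $q_i\in[0,1]$ (with $\log 0=-\infty$). *)

(* Defs.v *)
From mathcomp Require Import all_boot all_order all_algebra.
From mathcomp Require Import all_classical all_reals all_analysis.
Set Implicit Arguments. Unset Strict Implicit. Unset Printing Implicit Defensive.
Import Order.TTheory GRing.Theory Num.Theory.
Local Open Scope ring_scope.

Section Aloha.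
Variables (R : realType) (N : nat).

Definition profile := 'I_N -> R.

Definition in_unit (x : R) := 0 <= x /\ x <= 1.

Definition alpha (q : profile) (i : 'I_N) : R := \prod_(j < N | j != i) (1 - q j).

Definition gamma (q : profile) (i : 'I_N) : R := q i * alpha q i.

Definition gamma_bar_others (q : profile) (i : 'I_N) : R :=
  (N.-1)%:R^-1 * \sum_(j < N | j != i) gamma q j.

(* net utility, extended-real valued, with log 0 = -oo *)
Definition utility (C A M : 'I_N -> R) (q : profile) (i : 'I_N) : \bar R :=
  if 0 < gamma q i then
    (C i * ln (gamma q i) + A i * alpha q i * gamma_bar_others q i - M i * q i)%:E
  else -oo%E.

Definition update (q : profile) (i : 'I_N) (x : R) : profile :=
  fun j => if j == i then x else q j.

Definition nash_equilibrium (C A M : 'I_N -> R) (q : profile) : Prop :=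
  (forall i, in_unit (q i)) /\
  forall i (x : R), in_unit x ->
    (utility C A M (update q i x) i <= utility C A M q i)%E.

End Aloha.

(* Main.v *)
Require Import Defs.
From mathcomp Require Import all_boot all_order all_algebra.
From mathcomp Require Import all_classical all_reals all_analysis.
From mathcomp Require Import zify ring lra.
Import Order.TTheory GRing.Theory Num.Theory.
Import numFieldNormedType.Exports.
Local Open Scope ring_scope.

Section S.
Variables (R : realType) (N : nat) (hN : (2 <= N)%N) (q x : R) (i : 'I_N).
Let U := update (fun _ : 'I_N => q) i x.

Lemma alpha_upd : alpha U i = (1 - q) ^+ N.-1.
Proof.
rewrite /alpha (eq_bigr (fun=> 1 - q)) => [|j /negbTE ji]; last by rewrite /U /update ji.
have -> : \prod_(j < N | j != i) (1 - q) = \prod_(j in predC1 i) (1 - q) by apply: eq_bigl.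
by rewrite prodr_const cardC1 card_ord.
Qed.

Lemma gamma_upd_i : gamma U i = x * (1 - q) ^+ N.-1.
Proof. by rewrite /gamma alpha_upd /U /update eqxx. Qed.

Lemma gamma_upd_j j : j != i -> gamma U j = q * ((1 - x) * (1 - q) ^+ N.-2).
Proof.
move=> ji; rewrite /gamma /alpha {1}/U /update (negbTE ji).
rewrite (bigD1 i) /=; last by rewrite eq_sym.
rewrite /U /update eqxx; congr (_ * (_ * _)).
rewrite (eq_bigr (fun=> 1 - q)) => [|k /andP[_ /negbTE ki]]; last by rewrite ki.
have -> : \prod_(k < N | (k != j) && (k != i)) (1 - q) =
  \prod_(k in [predD1 predC1 j & i]) (1 - q).
  by apply: eq_bigl => k; rewrite !inE andbC.
rewrite prodr_const; congr (_ ^+ _).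
have := cardD1 i (predC1 j); rewrite cardC1 card_ord !inE eq_sym ji /=.
move=> H; rewrite -[LHS]/(#|[predD1 predC1 j & i]|). by rewrite H.
Qed.

Lemma gbar_upd : gamma_bar_others U i = q * ((1 - x) * (1 - q) ^+ N.-2).
Proof.
rewrite /gamma_bar_others (eq_bigr (fun=> q * ((1 - x) * (1 - q) ^+ N.-2))); last first.
  by move=> j; apply: gamma_upd_j.
have -> : \sum_(j < N | j != i) (q * ((1 - x) * (1 - q) ^+ N.-2)) =
  \sum_(j in predC1 i) (q * ((1 - x) * (1 - q) ^+ N.-2)) by apply: eq_bigl.
rewrite sumr_const cardC1 card_ord -(mulr_natr (q * _) N.-1) mulrC mulfK //.
by rewrite pnatr_eq0; case: N hN => [|[|n]].
Qed.

End S.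

Theorem proposition1 (R : realType) (N : nat) (hN : (2 <= N)%N)
  (C A M : 'I_N -> R) (c a : R)
  (hC : forall i, 0 < C i) (hM : forall i, 0 < M i) (hA : forall i, 0 <= A i)
  (hc : forall i, C i / M i = c) (ha : forall i, A i / M i = a) (hc1 : c < 1) :
  exists qs : R,
    [/\ 0 < qs, qs < 1,
        a * qs ^+ 2 * (1 - qs) ^+ (2 * N - 3) + qs - c = 0
      & nash_equilibrium C A M (fun _ : 'I_N => qs)].
Proof.
have i0 : 'I_N by exists 0%N; lia.
have c0 : 0 < c by rewrite -(hc i0) divr_gt0.
have a0 : 0 <= a by rewrite -(ha i0) divr_ge0 // ltW.
pose f (y : R) := a * XMonemX 2 (2 * N - 3) y + y - c.
have fc : {within `[0, c], continuous f}%classic.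
  have h1 : continuous (fun y : R => a * XMonemX 2 (2 * N - 3) y).
    move=> y; apply: (@continuousM R R (fun=> a) (XMonemX 2 (2 * N - 3))).
      exact: cst_continuous.
    exact: continuous_XMonemX.
  apply: continuous_subspaceT => y.
  rewrite /f.
  apply: cvgB; [apply: cvgD; [exact: h1 | exact: cvg_id] | exact: cvg_cst].
have [qs qsI fq] : exists2 qs, qs \in `[0, c] & f qs = 0.
  apply: IVT => //; first exact: ltW.
  have f0 : f 0 = - c by rewrite /f /XMonemX expr0n /= !mul0r mulr0 add0r sub0r.
  have fc0 : 0 <= f c.
    have h1c : 0 <= 1 - c by rewrite subr_ge0 ltW.
    rewrite /f /XMonemX addrK; apply: mulr_ge0 => //; apply: mulr_ge0.
      by apply: exprn_ge0; apply: ltW.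
    by apply: exprn_ge0; exact: h1c.
  rewrite f0; apply/andP; split.
    by rewrite ge_min oppr_le0 ltW.
  by rewrite le_max fc0 orbT.
move: qsI; rewrite in_itv /= => /andP[qs_ge0 qs_lec].
have qs_neq0 : qs != 0.
  apply/eqP => q0; move: fq; rewrite q0 /f /XMonemX expr0n /= !mul0r mulr0 add0r sub0r.
  by move/eqP; rewrite oppr_eq0 gt_eqF.
have qs0 : 0 < qs by rewrite lt0r qs_neq0.
have qs1 : qs < 1 by apply: le_lt_trans hc1.
have e : (2 * N - 3 = N.-1 + N.-2)%N by rewrite -!subn1; lia.
pose B := (1 - qs) ^+ N.-1; pose D := (1 - qs) ^+ N.-2.
have Bpos : 0 < B by rewrite exprn_gt0 // subr_gt0.
have Dpos : 0 < D by rewrite exprn_gt0 // subr_gt0.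
have feq : a * qs ^+ 2 * (B * D) + qs - c = 0.
  by move: fq; rewrite /f /XMonemX /B /D -exprD -e mulrA.
exists qs; split => //; first by rewrite e exprD.
split.
  by move=> j; split; [apply: ltW | apply: ltW].
move=> i x [x0 x1].
have -> : utility C A M (fun _ => qs) i = utility C A M (update (fun _ => qs) i qs) i.
  by congr utility; apply: funext => j; rewrite /update; case: ifP.
rewrite /utility !gamma_upd_i !alpha_upd !gbar_upd //.
rewrite -/B -/D !(pmulr_lgt0 _ Bpos) qs0.
have [xpos|] := ltP 0 x; last by rewrite leNye.
rewrite lee_fin.
have Bp : B \in Num.pos by rewrite posrE.
have xp : x \in Num.pos by rewrite posrE.
have qp : qs \in Num.pos by rewrite posrE.
rewrite !lnM //.
have hl : ln x - ln qs <= (x - qs) / qs.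
  rewrite -ln_div //.
  have -> : (x - qs) / qs = x / qs - 1 by rewrite mulrBl divff.
  have h := @le_ln1Dx R (x / qs - 1).
  have e1 : 1 + (x / qs - 1) = x / qs by rewrite addrCA subrr addr0.
  rewrite e1 in h; apply: h.
  have : 0 < x / qs by rewrite divr_gt0.
  lra.
have eC : C i = c * M i by rewrite -(hc i) divfK // gt_eqF.
have eA : A i = a * M i by rewrite -(ha i) divfK // gt_eqF.
have Mi := hM i.
have h1 : c * M i * (ln x - ln qs) <= c * M i * ((x - qs) / qs).
  by rewrite ler_wpM2l // mulr_ge0 // ltW.
have ec : c = qs + a * qs ^+ 2 * (B * D) by move/eqP: feq; rewrite subr_eq0 => /eqP <-; ring.
have h2 : c * M i * ((x - qs) / qs) = M i * (x - qs) * (1 + a * qs * B * D).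
  by rewrite ec; field; rewrite qs_neq0.
rewrite /update !eqxx -subr_ge0.
have -> : C i * (ln qs + ln B) + A i * B * (qs * ((1 - qs) * D)) - M i * qs -
    (C i * (ln x + ln B) + A i * B * (qs * ((1 - x) * D)) - M i * x) =
    M i * (x - qs) * (1 + a * qs * B * D) - c * M i * (ln x - ln qs).
  by rewrite eC eA; ring.
by rewrite -h2 subr_ge0.
Qed.
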